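(* Let $\beta>0$, $\nu>-1$, $\kappa>0$, $\gamma=\beta/(\nu+2)$, $\eta_\infty>0$, and let $s\in\mathbb{R}$ satisfy $$\frac{\beta(\nu+1)}{2(\nu+2)\,\eta_\infty^{\nu+3}}<s^2<\frac{\beta}{\eta_\infty^{\nu+3}}.$$ Then there exists a non-constant smooth solution $(w_s(z),\eta_s(z))$, $z\in\mathbb{R}$, with $\eta_s>0$, of the system $$s\,w_s+\eta_\infty^{-(\nu+2)}-\eta_s^{-(\nu+2)}=0,\qquad \gamma w_s-\kappa w_s''+s(\eta_s-\eta_\infty)=0,$$ satisfying $\lim_{|z|\to\infty}\eta_s(z)=\eta_\infty$ and $\lim_{|z|\to\infty}w_s(z)=0$. Moreover $\eta_s(z)>\eta_\infty$ for all $z$, i.e. in the phase plane $(\eta_s,\eta_s')$ this solution is a homoclinic loop to the saddle point $(\eta_\infty,0)$ lying to the right of it.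
   Context: These equations describe traveling waves $w=w_s(x-st)$, $\eta=\eta_s(x-st)$ of the system $w_t=-\partial_x(\eta^{-(\nu+2)})$, $\eta_t=(\gamma-\kappa\partial_x^2)w_x$. Eliminating $w_s$ via the first equation gives a second-order ODE for $\eta_s$. *)

(* Defs.v *)
From Stdlib Require Import Reals.
Open Scope R_scope.

Definition smooth (f : R -> R) : Prop :=
  exists D : nat -> R -> R,
    D 0%nat = f /\ forall (n : nat) (x : R), derivable_pt_lim (D n) x (D (S n) x).

Definition lim_pinf (f : R -> R) (l : R) : Prop :=
  forall eps : R, 0 < eps -> exists M : R, forall z : R, M < z -> Rabs (f z - l) < eps.

Definition lim_minf (f : R -> R) (l : R) : Prop :=
  forall eps : R, 0 < eps -> exists M : R, forall z : R, z < M -> Rabs (f z - l) < eps.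

(* Main.v *)
Require Import Defs.
From Stdlib Require Import Reals.
Open Scope R_scope.
From Stdlib Require Import Lra Lia FunctionalExtensionality ClassicalEpsilon.
From Coquelicot Require Import Coquelicot.
Open Scope R_scope.

Definition Cn (P : R -> Prop) (n : nat) (f : R -> R) : Prop :=
  exists D : nat -> R -> R, D 0%nat = f /\
    forall k x, (k < n)%nat -> P x -> derivable_pt_lim (D k) x (D (S k) x).

Lemma Dplus f g x a b : derivable_pt_lim f x a -> derivable_pt_lim g x b ->
  derivable_pt_lim (fun y => f y + g y) x (a + b).
Proof. intros; apply (derivable_pt_lim_plus f g x a b); auto. Qed.
Lemma Dmult f g x a b : derivable_pt_lim f x a -> derivable_pt_lim g x b ->
  derivable_pt_lim (fun y => f y * g y) x (a * g x + f x * b).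
Proof. intros; apply (derivable_pt_lim_mult f g x a b); auto. Qed.
Lemma Dcomp f g x a b : derivable_pt_lim g x a -> derivable_pt_lim f (g x) b ->
  derivable_pt_lim (fun y => f (g y)) x (b * a).
Proof. intros; apply (derivable_pt_lim_comp g f x a b); auto. Qed.
Lemma Dconst c x : derivable_pt_lim (fun _ => c) x 0.
Proof. apply (derivable_pt_lim_const c x). Qed.
Lemma Did x : derivable_pt_lim (fun y => y) x 1.
Proof. apply (derivable_pt_lim_id x). Qed.
Lemma Dscal c f x a : derivable_pt_lim f x a -> derivable_pt_lim (fun y => c * f y) x (c * a).
Proof. intros H. replace (c*a) with (0 * f x + c * a) by ring.
  apply (Dmult (fun _ => c) f); auto using Dconst. Qed.
Lemma Dext f g x a : (forall y, f y = g y) -> derivable_pt_lim f x a -> derivable_pt_lim g x a.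
Proof. intros H; replace g with f; auto; apply functional_extensionality; auto. Qed.
Lemma Deq f x a b : a = b -> derivable_pt_lim f x a -> derivable_pt_lim f x b.
Proof. intros ->; auto. Qed.

Lemma Cn_0 P f : Cn P 0 f.
Proof. exists (fun _ => f); split; auto; intros; lia. Qed.

Lemma Cn_S P n f df : (forall x, P x -> derivable_pt_lim f x (df x)) -> Cn P n df -> Cn P (S n) f.
Proof.
  intros Hd [D [H0 HD]].
  exists (fun k => match k with O => f | S k => D k end); split; auto.
  intros [|k] x Hk Px; simpl.
  - rewrite H0; auto.
  - apply HD; auto; lia.
Qed.

Lemma Cn_S_inv P n f : Cn P (S n) f -> exists df, (forall x, P x -> derivable_pt_lim f x (df x)) /\ Cn P n df.
Proof.
  intros [D [H0 HD]]. exists (D 1%nat); split.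
  - intros x Px; rewrite <- H0; apply HD; auto; lia.
  - exists (fun k => D (S k)); split; auto. intros k x Hk Px; apply HD; auto; lia.
Qed.

Lemma Cn_weak P n f : Cn P (S n) f -> Cn P n f.
Proof. intros [D [H0 HD]]; exists D; split; auto; intros; apply HD; auto; lia. Qed.

Lemma Cn_ext P n f g : Cn P n f -> (forall x, f x = g x) -> Cn P n g.
Proof. intros H E; replace g with f; auto; apply functional_extensionality; auto. Qed.

Lemma Cn_const P n c : Cn P n (fun _ => c).
Proof. exists (fun k => match k with O => fun _ => c | _ => fun _ => 0 end); split; auto.
  intros [|k] x _ _; apply Dconst. Qed.

Lemma Cn_id P n : Cn P n (fun x => x).
Proof. exists (fun k => match k with O => fun x => x | 1%nat => fun _ => 1 | _ => fun _ => 0 end); split; auto.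
  intros [|[|k]] x _ _; [apply Did|apply Dconst|apply Dconst]. Qed.

Lemma Cn_plus P n f g : Cn P n f -> Cn P n g -> Cn P n (fun x => f x + g x).
Proof.
  intros [D [H0 HD]] [E [E0 HE]].
  exists (fun k x => D k x + E k x); split.
  - subst; auto.
  - intros; apply Dplus; auto.
Qed.

Lemma Cn_scal P n c f : Cn P n f -> Cn P n (fun x => c * f x).
Proof.
  intros [D [H0 HD]]. exists (fun k x => c * D k x); split.
  - subst; auto.
  - intros; apply Dscal; auto.
Qed.

Lemma Cn_mult P n : forall f g, Cn P n f -> Cn P n g -> Cn P n (fun x => f x * g x).
Proof.
  induction n as [|n IH]; intros f g Hf Hg; [apply Cn_0|].
  destruct (Cn_S_inv _ _ _ Hf) as [df [Hdf Cdf]].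
  destruct (Cn_S_inv _ _ _ Hg) as [dg [Hdg Cdg]].
  apply Cn_S with (df := fun x => df x * g x + f x * dg x).
  - intros x Px; apply Dmult; auto.
  - apply Cn_plus; apply IH; auto; apply Cn_weak; auto.
Qed.

Lemma Cn_comp Q P n : forall f g, Cn Q n f -> Cn P n g -> (forall x, P x -> Q (g x)) ->
  Cn P n (fun x => f (g x)).
Proof.
  induction n as [|n IH]; intros f g Hf Hg HPQ; [apply Cn_0|].
  destruct (Cn_S_inv _ _ _ Hf) as [df [Hdf Cdf]].
  destruct (Cn_S_inv _ _ _ Hg) as [dg [Hdg Cdg]].
  apply Cn_S with (df := fun x => df (g x) * dg x).
  - intros x Px; apply Dcomp; auto.
  - apply Cn_mult; auto. apply IH; auto. apply Cn_weak; auto.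
Qed.

Lemma Cn_Rpower n : forall a, Cn (fun x => 0 < x) n (fun x => Rpower x a).
Proof.
  induction n as [|n IH]; intros a; [apply Cn_0|].
  apply Cn_S with (df := fun x => a * Rpower x (a - 1)).
  - intros x Px; apply derivable_pt_lim_power; auto.
  - apply Cn_scal; auto.
Qed.

Lemma Cn_smooth f : (forall n, Cn (fun _ => True) n f) -> smooth f.
Proof.
  intros H.
  set (E := fun n => proj1_sig (constructive_indefinite_description _ (H n))).
  assert (HE : forall n, E n 0%nat = f /\ forall k x, (k < n)%nat -> derivable_pt_lim (E n k) x (E n (S k) x)).
  { intros n; unfold E; destruct (constructive_indefinite_description _ (H n)) as [D [H0 HD]]; simpl.
    split; auto. }
  set (D := fun k => E (S k) k).
  assert (HD : forall k m, (k < m)%nat -> E m k = D k).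
  { induction k as [|k IH]; intros m Hm.
    - unfold D; destruct (HE m) as [-> _]; destruct (HE 1%nat) as [-> _]; auto.
    - apply functional_extensionality; intros x.
      unfold D.
      apply uniqueness_limite with (f := D k) (x := x).
      + rewrite <- (IH m) by lia. apply (proj2 (HE m)); lia.
      + rewrite <- (IH (S (S k))) by lia. apply (proj2 (HE (S (S k)))); lia. }
  exists D; split.
  - unfold D; apply (proj1 (HE 1%nat)).
  - intros n x. rewrite <- (HD n (S (S n))) by lia.
    rewrite <- (HD (S n) (S (S n))) by lia. apply (proj2 (HE _)); lia.
Qed.

Lemma bootstrap (u v G : R -> R) :
  (forall z, derivable_pt_lim u z (v z)) ->
  (forall z, derivable_pt_lim v z (G (u z))) ->
  (forall z, 0 < u z) ->
  (forall n, Cn (fun x => 0 < x) n G) ->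
  forall n, Cn (fun _ => True) n u /\ Cn (fun _ => True) n v.
Proof.
  intros Hu Hv Hpos HG n; induction n as [|n [IHu IHv]]; [split; apply Cn_0|].
  split.
  - apply Cn_S with (df := v); auto.
  - apply Cn_S with (df := fun z => G (u z)); auto.
    apply Cn_comp with (Q := fun x => 0 < x); auto.
Qed.

Lemma D_cont f x l : derivable_pt_lim f x l -> continuity_pt f x.
Proof. intros H; apply derivable_continuous_pt; exists l; auto. Qed.

Lemma mvt f df a b : a <= b -> (forall x, a <= x <= b -> derivable_pt_lim f x (df x)) ->
  exists c, a <= c <= b /\ f b - f a = df c * (b - a).
Proof.
  intros Hab Hd.
  destruct (MVT_gen f a b df) as [c [Hc E]].
  - intros x Hx; rewrite Rmin_left, Rmax_right in Hx by lra.
    apply is_derive_Reals; apply Hd; lra.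
  - intros x Hx; rewrite Rmin_left, Rmax_right in Hx by lra.
    apply (D_cont _ _ (df x)); apply Hd; lra.
  - rewrite Rmin_left, Rmax_right in Hc by lra. exists c; split; auto.
Qed.

Lemma incr f df a b : a <= b -> (forall x, a <= x <= b -> derivable_pt_lim f x (df x)) ->
  (forall x, a <= x <= b -> 0 <= df x) -> f a <= f b.
Proof.
  intros Hab Hd Hp. destruct (mvt f df a b Hab Hd) as [c [Hc E]].
  assert (0 <= df c * (b - a)) by (apply Rmult_le_pos; [apply Hp; lra| lra]). lra.
Qed.

Lemma sincr f df a b : a < b -> (forall x, a <= x <= b -> derivable_pt_lim f x (df x)) ->
  (forall x, a <= x <= b -> 0 < df x) -> f a < f b.
Proof.
  intros Hab Hd Hp. destruct (mvt f df a b (Rlt_le _ _ Hab) Hd) as [c [Hc E]].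
  assert (0 < df c * (b - a)) by (apply Rmult_lt_0_compat; [apply Hp; lra| lra]). lra.
Qed.

Lemma cont_eps f x : continuity_pt f x -> forall eps, 0 < eps ->
  exists delta, 0 < delta /\ forall y, Rabs (y - x) < delta -> Rabs (f y - f x) < eps.
Proof.
  intros H eps Heps. destruct (H eps Heps) as [d [Hd Hy]].
  exists d; split; auto. intros y Hyx.
  destruct (Req_dec y x) as [->|Hne].
  - rewrite Rminus_eq_0, Rabs_R0; auto.
  - apply (Hy y); split; auto. unfold D_x, no_cond; split; auto.
Qed.

Lemma eps_cont f x : (forall eps, 0 < eps ->
  exists delta, 0 < delta /\ forall y, Rabs (y - x) < delta -> Rabs (f y - f x) < eps) -> continuity_pt f x.
Proof.
  intros H eps Heps. destruct (H eps Heps) as [d [Hd Hy]].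
  exists d; split; auto. intros y [_ Hyx]. apply Hy; auto.
Qed.

Lemma D_ext_loc f g x l : (exists eps, 0 < eps /\ forall y, Rabs (y - x) < eps -> f y = g y) ->
  derivable_pt_lim f x l -> derivable_pt_lim g x l.
Proof.
  intros [e [He Hfg]] Hf eps Heps. destruct (Hf eps Heps) as [d Hd].
  assert (Hm : 0 < Rmin d e) by (apply Rmin_pos; auto; apply cond_pos).
  exists (mkposreal _ Hm). intros h Hh Hlt; simpl in Hlt.
  rewrite <- !Hfg. apply Hd; auto. apply Rlt_le_trans with (1 := Hlt), Rmin_l.
  rewrite Rminus_eq_0, Rabs_R0; auto.
  replace (x + h - x) with h by ring. apply Rlt_le_trans with (1 := Hlt), Rmin_r.
Qed.

Lemma deriv_at_mvt f df x0 : (forall x, continuity_pt f x) ->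
  (forall x, x <> x0 -> derivable_pt_lim f x (df x)) -> continuity_pt df x0 ->
  derivable_pt_lim f x0 (df x0).
Proof.
  intros Hc Hd Hdc eps Heps.
  destruct (cont_eps _ _ Hdc eps Heps) as [d [Hd0 Hdd]].
  exists (mkposreal _ Hd0). intros h Hh Hlt; simpl in Hlt.
  destruct (MVT_gen f x0 (x0 + h) df) as [c [Hcr E]].
  - intros x Hx. apply is_derive_Reals, Hd.
    destruct Hx as [H1 H2]. intros ->.
    destruct (Rle_dec x0 (x0 + h)).
    + rewrite Rmin_left in H1; lra.
    + rewrite Rmax_left in H2; lra.
  - intros; apply Hc.
  - replace ((f (x0 + h) - f x0) / h - df x0) with (df c - df x0).
    + apply Hdd. destruct Hcr as [H1 H2].
      destruct (Rle_dec x0 (x0 + h)).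
      * rewrite Rmin_left in H1 by lra; rewrite Rmax_right in H2 by lra.
        rewrite Rabs_right by lra. rewrite Rabs_right in Hlt by lra. lra.
      * rewrite Rmin_right in H1 by lra; rewrite Rmax_left in H2 by lra.
        rewrite Rabs_left1 by lra. rewrite Rabs_left in Hlt by lra. lra.
    + rewrite E. field_simplify; auto. replace (x0 + h - x0) with h by ring. field; auto.
Qed.

Lemma inv_deriv f g df lb ub x : lb < x < ub -> continuity_pt g x ->
  (forall a, g lb <= a <= g ub -> derivable_pt_lim f a (df a)) -> g lb <= g x <= g ub ->
  (forall y, lb <= y <= ub -> f (g y) = y) -> df (g x) <> 0 ->
  derivable_pt_lim g x (1 / df (g x)).
Proof.
  intros Hx Hc Hd Hg Hfg Hne.
  pose (Prf := fun a (H : g lb <= a <= g ub) => exist (fun l => derivable_pt_lim f a l) (df a) (Hd a H)).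
  assert (E : derive_pt f (g x) (Prf (g x) Hg) = df (g x)).
  { apply derive_pt_eq_0. apply Hd; auto. }
  rewrite <- E. apply (Ranalysis5.derivable_pt_lim_recip_interv f g lb ub x Prf); auto; try lra.
Qed.

Lemma ball_abs (x e y : R) : ball x e y <-> Rabs (y - x) < e.
Proof. unfold ball; simpl; unfold AbsRing_ball, abs, minus, plus, opp; simpl. tauto. Qed.

Lemma antideriv (f : R -> R) a b c : a < c < b -> (forall x, a < x < b -> continuity_pt f x) ->
  forall x, a < x < b -> derivable_pt_lim (fun y => RInt f c y) x (f x).
Proof.
  intros Hc Hf x Hx. apply is_derive_Reals. apply is_derive_RInt with (a := c).
  - assert (He : 0 < Rmin (x - a) (b - x)) by (apply Rmin_pos; lra).
    exists (mkposreal _ He). intros y Hy. apply ball_abs in Hy; simpl in Hy.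
    assert (H1 := Rmin_l (x - a) (b - x)). assert (H2 := Rmin_r (x - a) (b - x)).
    simpl in H1, H2.
    apply Rabs_def2 in Hy; destruct Hy. unfold minus, plus, opp in H, H0; simpl in H, H0. assert (a < y < b) by lra.
    apply (@RInt_correct R_CompleteNormedModule). apply (@ex_RInt_continuous R_CompleteNormedModule). intros z Hz.
    apply continuity_pt_filterlim. apply Hf.
    assert (Rmin c y > a) by (unfold Rmin; destruct Rle_dec; lra).
    assert (Rmax c y < b) by (unfold Rmax; destruct Rle_dec; lra). lra.
  - apply continuity_pt_filterlim. apply Hf; auto.
Qed.

Lemma sincr_open f df a b : a < b -> (forall x, a <= x <= b -> derivable_pt_lim f x (df x)) ->
  (forall x, a < x < b -> 0 < df x) -> (forall x, a <= x <= b -> 0 <= df x) -> f a < f b.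
Proof.
  intros Hab Hd Hs Hw.
  assert (f a <= f ((3*a+b)/4)) by (apply (incr f df); [lra| intros; apply Hd; lra | intros; apply Hw; lra]).
  assert (f ((3*a+b)/4) < f ((a+3*b)/4)) by (apply (sincr f df); [lra| intros; apply Hd; lra | intros; apply Hs; lra]).
  assert (f ((a+3*b)/4) <= f b) by (apply (incr f df); [lra| intros; apply Hd; lra | intros; apply Hw; lra]).
  lra.
Qed.

Lemma opp_D f x l : derivable_pt_lim f x l -> derivable_pt_lim (fun y => - f y) x (- l).
Proof. intros H. apply (derivable_pt_lim_opp f x l H). Qed.

Lemma sdecr_open f df a b : a < b -> (forall x, a <= x <= b -> derivable_pt_lim f x (df x)) ->
  (forall x, a < x < b -> df x < 0) -> (forall x, a <= x <= b -> df x <= 0) -> f b < f a.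
Proof.
  intros Hab Hd Hs Hw.
  assert (- f a < - f b); [|lra].
  apply (sincr_open (fun y => - f y) (fun y => - df y)); auto.
  intros; apply opp_D; auto. intros x Hx; specialize (Hs x Hx); lra.
  intros x Hx; specialize (Hw x Hx); lra.
Qed.

Lemma decr f df a b : a <= b -> (forall x, a <= x <= b -> derivable_pt_lim f x (df x)) ->
  (forall x, a <= x <= b -> df x <= 0) -> f b <= f a.
Proof.
  intros Hab Hd Hw.
  assert (- f a <= - f b); [|lra].
  apply (incr (fun y => - f y) (fun y => - df y)); auto.
  intros; apply opp_D; auto. intros x Hx; specialize (Hw x Hx); lra.
Qed.

Lemma Rpow_decr a x y : a < 0 -> 0 < x < y -> Rpower y a < Rpower x a.
Proof.
  intros Ha [Hx Hxy]. unfold Rpower. apply exp_increasing.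
  assert (ln x < ln y) by (apply ln_increasing; lra). nra.
Qed.
Lemma Rpow_pos x a : 0 < Rpower x a.
Proof. unfold Rpower; apply exp_pos. Qed.

Section Main.
Variables beta nu kappa gamma e s : R.
Hypothesis hbeta : 0 < beta.
Hypothesis hnu : -1 < nu.
Hypothesis hkappa : 0 < kappa.
Hypothesis hgamma : gamma = beta / (nu + 2).
Hypothesis heta : 0 < e.
Hypothesis hs_lo : beta * (nu + 1) / (2 * (nu + 2) * Rpower e (nu + 3)) < s ^ 2.
Hypothesis hs_hi : s ^ 2 < beta / Rpower e (nu + 3).

Definition p := / (nu + 2).
Definition q := 1 - p.
Definition U := Rpower e (- (nu + 2)).
Definition g (u : R) := (gamma * (u - U) + s^2 * (Rpower u (-p) - e)) / kappa.
Definition g1 (u : R) := (gamma - s^2 * p * Rpower u (-p - 1)) / kappa.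
Definition Pf (u : R) := 2 / kappa * (gamma * (u - U)^2 / 2 +
   s^2 * ((Rpower u q - Rpower U q) / q - e * (u - U))).

Lemma p_bounds : 0 < p < 1.
Proof. unfold p. split. apply Rinv_0_lt_compat; lra.
  rewrite <- Rinv_1. apply Rinv_lt_contravar; lra. Qed.
Lemma q_pos : 0 < q.
Proof. unfold q; generalize p_bounds; lra. Qed.
Lemma A_pos : 0 < Rpower e (nu + 3).
Proof. apply Rpow_pos. Qed.
Lemma s2_pos : 0 < s ^ 2.
Proof.
  apply Rlt_trans with (2 := hs_lo). unfold Rdiv. apply Rmult_lt_0_compat.
  nra. apply Rinv_0_lt_compat. generalize A_pos; nra.
Qed.
Lemma s_ne : s <> 0.
Proof. intros H. assert (X := s2_pos). rewrite H in X. simpl in X; lra. Qed.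
Lemma U_pos : 0 < U.
Proof. apply Rpow_pos. Qed.
Lemma gamma_pos : 0 < gamma.
Proof. rewrite hgamma. unfold Rdiv. apply Rmult_lt_0_compat; auto. apply Rinv_0_lt_compat; lra. Qed.
Lemma gamma_p : gamma = beta * p.
Proof. rewrite hgamma; unfold p; field; lra. Qed.

Lemma RU : Rpower U (-p) = e.
Proof. unfold U; rewrite Rpower_mult.
  replace (-(nu+2) * -p) with 1 by (unfold p; field; lra). apply Rpower_1; auto. Qed.
Lemma RU1 : Rpower U (-p - 1) = Rpower e (nu + 3).
Proof. unfold U; rewrite Rpower_mult. f_equal. unfold p; field; lra. Qed.
Lemma inv_pow u : 0 < u -> Rpower (Rpower u (-p)) (-(nu+2)) = u.
Proof. intros Hu; rewrite Rpower_mult.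
  replace (-p * -(nu+2)) with 1 by (unfold p; field; lra). apply Rpower_1; auto. Qed.

Lemma gU : g U = 0.
Proof. unfold g; rewrite RU. unfold Rdiv; ring. Qed.
Lemma PfU : Pf U = 0.
Proof. unfold Pf. rewrite !Rminus_eq_0. field. split; generalize q_pos; lra. Qed.

Lemma g1U : 0 < g1 U.
Proof.
  unfold g1. rewrite RU1, gamma_p. unfold Rdiv. apply Rmult_lt_0_compat; [|apply Rinv_0_lt_compat; auto].
  assert (HA := A_pos). assert (Hp := p_bounds).
  assert (s ^ 2 * Rpower e (nu + 3) < beta).
  { apply Rmult_lt_compat_r with (r := Rpower e (nu+3)) in hs_hi; auto.
    unfold Rdiv in hs_hi. rewrite Rmult_assoc, Rinv_l in hs_hi by lra. lra. }
  nra.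
Qed.

Lemma g1_incr x y : 0 < x < y -> g1 x < g1 y.
Proof.
  intros H. unfold g1. unfold Rdiv. apply Rmult_lt_compat_r. apply Rinv_0_lt_compat; auto.
  assert (Rpower y (-p-1) < Rpower x (-p-1)) by (apply Rpow_decr; auto; generalize p_bounds; lra).
  assert (0 < s^2 * p) by (generalize s2_pos p_bounds; intros; nra). nra.
Qed.

Lemma Dg u : 0 < u -> derivable_pt_lim g u (g1 u).
Proof.
  intros Hu.
  apply Dext with (f := fun u => /kappa * (gamma * u + s^2 * Rpower u (-p) + (- gamma*U - s^2*e))).
  { intros y; unfold g; field; lra. }
  apply Deq with (a := /kappa * (gamma * 1 + s^2 * (-p * Rpower u (-p - 1)) + 0)).
  { unfold g1; field; lra. }
  apply Dscal. apply Dplus; [|apply Dconst]. apply Dplus.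
  apply Dscal, Did. apply Dscal, derivable_pt_lim_power; auto.
Qed.

Lemma Dg1 u : 0 < u -> derivable_pt_lim g1 u (s^2 * p * (p+1) * Rpower u (-p-2) / kappa).
Proof.
  intros Hu.
  apply Dext with (f := fun u => /kappa * (- (s^2 * p) * Rpower u (-p-1) + gamma)).
  { intros y; unfold g1; field; lra. }
  apply Deq with (a := /kappa * (- (s^2 * p) * ((-p-1) * Rpower u (-p - 1 - 1)) + 0)).
  { replace (-p-1-1) with (-p-2) by ring. field; lra. }
  apply Dscal. apply Dplus; [|apply Dconst]. apply Dscal, derivable_pt_lim_power; auto.
Qed.

Lemma DPf u : 0 < u -> derivable_pt_lim Pf u (2 * g u).
Proof.
  intros Hu. assert (Hq := q_pos).
  apply Dext with (f := fun u => 2 / kappa * (gamma / 2 * (u * u) + (- gamma * U - s^2 * e) * u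
     + s^2 / q * Rpower u q + (gamma * U^2/2 - s^2 * Rpower U q / q + s^2 * e * U))).
  { intros y; unfold Pf; field; lra. }
  apply Deq with (a := 2 / kappa * (gamma / 2 * (1 * u + u * 1) + (- gamma * U - s^2 * e) * 1
     + s^2 / q * (q * Rpower u (q - 1)) + 0)).
  { unfold g. replace (q - 1) with (-p) by (unfold q; ring). field; lra. }
  apply Dscal. apply Dplus; [|apply Dconst]. apply Dplus; [apply Dplus|].
  - apply Dscal. apply Dmult; apply Did.
  - apply Dscal, Did.
  - apply Dscal, derivable_pt_lim_power; auto.
Qed.

Lemma g_cont u : 0 < u -> continuity_pt g u.
Proof. intros; apply (D_cont _ _ _ (Dg u H)). Qed.
Lemma g1_cont u : 0 < u -> continuity_pt g1 u.
Proof. intros; apply (D_cont _ _ _ (Dg1 u H)). Qed.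
Lemma Pf_cont u : 0 < u -> continuity_pt Pf u.
Proof. intros; apply (D_cont _ _ _ (DPf u H)). Qed.


Lemma exists_neg : exists a, 0 < a < U /\ Pf a < 0.
Proof.
  set (A := Rpower e (nu + 3)). set (E := Rpower e (-(nu + 1))).
  assert (HA : 0 < A) by apply Rpow_pos. assert (HE : 0 < E) by apply Rpow_pos.
  assert (Hq := q_pos). assert (Hp := p_bounds). assert (Hs := s2_pos). assert (Hg := gamma_pos).
  assert (HU := U_pos).
  assert (F1 : U * U * A = E).
  { unfold U, A, E. rewrite <- !Rpower_plus. f_equal; ring. }
  assert (F2 : e * U = E).
  { unfold U, E. rewrite <- (Rpower_1 e) at 1 by auto. rewrite <- Rpower_plus. f_equal; ring. }
  assert (F3 : Rpower U q = E).
  { unfold U, E, q, p. rewrite Rpower_mult. f_equal. field; lra. }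
  set (N := s^2 * E * (1/q - 1) - gamma * U^2 / 2).
  assert (HN : 0 < N).
  { assert (H1 : beta * (nu + 1) < s^2 * (2 * (nu + 2) * A)).
    { apply Rmult_lt_compat_r with (r := 2 * (nu + 2) * A) in hs_lo; [|nra].
      unfold Rdiv in hs_lo. rewrite Rmult_assoc, Rinv_l in hs_lo by nra. lra. }
    assert (H2 : gamma * (nu + 1) < 2 * A * s^2).
    { rewrite hgamma. apply Rmult_lt_reg_r with (r := nu + 2); [lra|].
      replace (beta / (nu + 2) * (nu + 1) * (nu + 2)) with (beta * (nu + 1)) by (field; lra). nra. }
    assert (E2 : N * (2 * A * (nu + 1)) = E * (2 * A * s^2 - gamma * (nu + 1))).
    { unfold N. rewrite <- F1. unfold q, p. field. repeat split; try lra.  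
 }
    assert (0 < N * (2 * A * (nu + 1))) by (rewrite E2; nra).
    assert (0 < 2*A*(nu+1)) by nra. apply (Rmult_lt_reg_r (2*A*(nu+1))); lra. }
  set (C := gamma / 2 + s^2 / q).
  assert (HC : 0 < C) by (unfold C; assert (0 < s^2/q) by (apply Rdiv_lt_0_compat; auto); lra).
  set (d := Rmin (1/2) (Rmin (U/2) (N / (2 * C)))).
  assert (Hd0 : 0 < d) by (unfold d; repeat apply Rmin_pos; try lra; apply Rdiv_lt_0_compat; lra).
  assert (Hd1 : d <= 1/2) by apply Rmin_l.
  assert (Hd2 : d <= U/2) by (eapply Rle_trans; [apply Rmin_r|apply Rmin_l]).
  assert (Hd3 : d <= N / (2 * C)) by (eapply Rle_trans; [apply Rmin_r|apply Rmin_r]).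
  set (a := Rpower d (1/q)).
  assert (Ha0 : 0 < a) by apply Rpow_pos.
  assert (Ra : Rpower a q = d).
  { unfold a; rewrite Rpower_mult. replace (1/q * q) with 1 by (field; lra). apply Rpower_1; auto. }
  assert (Had : a <= d).
  { unfold a, Rpower. rewrite <- (exp_ln d) at 2 by auto.
    assert (ln d < 0) by (rewrite <- ln_1; apply ln_increasing; lra).
    assert (1 <= 1/q) by (unfold q; apply (Rmult_le_reg_r (1 - p)); [lra|]; field_simplify; lra).
    destruct (Req_dec (1/q * ln d) (ln d)) as [E0|E0]; [rewrite E0; lra|].
    left; apply exp_increasing. nra. }
  exists a; split; [lra|].
  unfold Pf. rewrite Ra, F3.
  assert (Key : gamma * (a - U) ^ 2 / 2 + s ^ 2 * ((d - E) / q - e * (a - U)) < 0).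
  { replace (gamma * (a - U) ^ 2 / 2 + s ^ 2 * ((d - E) / q - e * (a - U)))
      with (gamma * a^2 / 2 - gamma * a * U - s^2 * e * a + s^2 * d / q - N).
    2:{ unfold N. rewrite <- F2. field. lra. }
    assert (gamma * a^2/2 <= gamma * d / 2 / 2).
    { assert (a^2 <= d / 2) by nra. nra. }
    assert (0 <= gamma * a * U) by (apply Rmult_le_pos; nra).
    assert (0 <= s^2 * e * a) by (apply Rmult_le_pos; nra).
    assert (d * C <= N / 2).
    { apply Rmult_le_compat_r with (r := C) in Hd3; [|lra].
      replace (N / (2 * C) * C) with (N/2) in Hd3 by (field; lra). lra. }
    unfold C in *. assert (s^2 * d / q = d * (s^2/q)) by (field; lra). nra. }
  assert (0 < 2 / kappa) by (apply Rdiv_lt_0_compat; lra). nra.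
Qed.


Lemma exists_c2 : exists c2, 0 < c2 < U /\ 0 < g1 c2.
Proof.
  assert (HU := U_pos). assert (H1 := g1U).
  destruct (cont_eps g1 U (g1_cont U HU) (g1 U / 2)) as [d [Hd Hy]]; [lra|].
  set (c2 := U - Rmin (d/2) (U/2)).
  assert (0 < Rmin (d/2) (U/2)) by (apply Rmin_pos; lra).
  assert (Rmin (d/2) (U/2) <= d/2) by apply Rmin_l.
  assert (Rmin (d/2) (U/2) <= U/2) by apply Rmin_r.
  exists c2; split; [unfold c2; lra|].
  assert (Rabs (c2 - U) < d) by (unfold c2; rewrite Rabs_left; lra).
  specialize (Hy c2 H3). apply Rabs_def2 in Hy. lra.
Qed.

Lemma strict_left x y : 0 < x < y -> g y - g x < g1 y * (y - x).
Proof.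
  intros Hxy. set (m := (x + y) / 2).
  destruct (mvt g g1 x m) as [c [Hc E1]]; [unfold m; lra| intros; apply Dg; lra|].
  destruct (mvt g g1 m y) as [c' [Hc' E2]]; [unfold m; lra| intros; apply Dg; unfold m in *; lra|].
  assert (g1 c < g1 y) by (apply g1_incr; unfold m in *; lra).
  assert (g1 c' <= g1 y) by (destruct (Req_dec c' y) as [->|]; [lra| left; apply g1_incr; unfold m in *; lra]).
  assert (0 < m - x) by (unfold m; lra). assert (0 < y - m) by (unfold m; lra).
  replace (y - x) with ((m - x) + (y - m)) by ring. nra.
Qed.

Lemma strict_right y z : 0 < y < z -> g z - g y > g1 y * (z - y).
Proof.
  intros Hyz. set (m := (y + z) / 2).
  destruct (mvt g g1 y m) as [c [Hc E1]]; [unfold m; lra| intros; apply Dg; lra|].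
  destruct (mvt g g1 m z) as [c' [Hc' E2]]; [unfold m; lra| intros; apply Dg; unfold m in *; lra|].
  assert (g1 y <= g1 c) by (destruct (Req_dec c y) as [->|]; [lra| left; apply g1_incr; unfold m in *; lra]).
  assert (g1 y < g1 c') by (apply g1_incr; unfold m in *; lra).
  assert (0 < m - y) by (unfold m; lra). assert (0 < z - m) by (unfold m; lra).
  replace (z - y) with ((m - y) + (z - m)) by ring. nra.
Qed.

Lemma exists_ut : exists ut, 0 < ut < U /\ Pf ut = 0 /\ (forall x, ut < x < U -> 0 < Pf x) /\ 0 < g ut.
Proof.
  assert (HU := U_pos).
  destruct exists_neg as [a [Ha HPa]]. destruct exists_c2 as [c2 [Hc2 Hg1c2]].
  assert (Hnear : forall x, c2 <= x < U -> 0 < Pf x).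
  { intros x Hx.
    assert (Hg : forall y, c2 <= y < U -> g y < 0).
    { intros y Hy. rewrite <- gU. apply (sincr g g1); try lra.
      intros; apply Dg; lra.
      intros z Hz. destruct (Req_dec z c2) as [->|]; auto.
      apply Rlt_trans with (1 := Hg1c2). apply g1_incr; lra. }
    rewrite <- PfU. apply (sdecr_open Pf (fun y => 2 * g y)); try lra.
    intros; apply DPf; lra.
    intros z Hz. specialize (Hg z). lra.
    intros z Hz. destruct (Req_dec z U) as [->|]. rewrite gU; lra. specialize (Hg z). lra. }
  set (S := fun x => a <= x < U /\ Pf x <= 0).
  assert (Hb : bound S).
  { exists c2. intros x [Hx1 Hx2]. destruct (Rle_lt_dec x c2); auto.
    specialize (Hnear x). lra. }
  assert (Hne : exists x, S x) by (exists a; split; lra).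
  destruct (completeness S Hb Hne) as [ut [Hub Hlub]].
  assert (Hau : a <= ut) by (apply Hub; split; lra).
  assert (Huc : ut <= c2).
  { apply Hlub. intros x [Hx1 Hx2]. destruct (Rle_lt_dec x c2); auto. specialize (Hnear x); lra. }
  assert (Hpos : forall x, ut < x < U -> 0 < Pf x).
  { intros x Hx. destruct (Rlt_le_dec 0 (Pf x)) as [|Hle]; auto.
    assert (x <= ut) by (apply Hub; split; lra). lra. }
  assert (Hut0 : 0 < ut) by lra.
  assert (HP0 : Pf ut = 0).
  { destruct (Rtotal_order (Pf ut) 0) as [Hlt|[Heq|Hgt]]; auto; exfalso.
    - destruct (cont_eps Pf ut (Pf_cont ut Hut0) (- Pf ut)) as [d [Hd Hy]]; [lra|].
      set (x := ut + Rmin (d/2) ((U - ut)/2)).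
      assert (0 < Rmin (d/2) ((U-ut)/2)) by (apply Rmin_pos; lra).
      assert (Rmin (d/2) ((U-ut)/2) <= d/2) by apply Rmin_l.
      assert (Rmin (d/2) ((U-ut)/2) <= (U-ut)/2) by apply Rmin_r.
      assert (Rabs (x - ut) < d) by (unfold x; rewrite Rabs_right; lra).
      specialize (Hy x H2). apply Rabs_def2 in Hy.
      assert (0 < Pf x) by (apply Hpos; unfold x; lra). lra.
    - destruct (cont_eps Pf ut (Pf_cont ut Hut0) (Pf ut)) as [d [Hd Hy]]; [lra|].
      assert (ut <= ut - d/2); [|lra].
      apply Hlub. intros x [Hx1 Hx2].
      assert (x <= ut) by (apply Hub; split; lra).
      destruct (Rle_lt_dec x (ut - d/2)); auto.
      assert (Rabs (x - ut) < d) by (rewrite Rabs_left1; lra).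
      specialize (Hy x H0). apply Rabs_def2 in Hy. lra. }
  exists ut; split; [lra|]; split; auto; split; auto.
  set (m := (ut + U) / 2).
  assert (Hm : 0 < Pf m) by (apply Hpos; unfold m; lra).
  destruct (mvt Pf (fun y => 2 * g y) ut m) as [xi [Hxi E]]; [unfold m; lra| intros; apply DPf; lra|].
  rewrite HP0 in E.
  assert (Hgxi : 0 < g xi).
  { assert (0 < m - ut) by (unfold m; lra). nra. }
  destruct (Rlt_le_dec 0 (g ut)) as [|Hle]; auto. exfalso.
  assert (xi <> ut) by (intros ->; lra).
  assert (Hl := strict_left ut xi ltac:(lra)).
  assert (0 < g1 xi) by (assert (0 < xi - ut) by lra; nra).
  assert (Hr := strict_right xi U ltac:(unfold m in *; lra)).
  rewrite gU in Hr. assert (0 < U - xi) by (unfold m in *; lra). nra.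
Qed.


Lemma Pf_upper v : 0 < v <= U -> Pf v <= g1 U * (U - v)^2.
Proof.
  intros Hv. assert (HU := U_pos).
  assert (Hgl : forall y, 0 < y <= U -> - g1 U * (U - y) <= g y).
  { intros y Hy. destruct (mvt g g1 y U) as [xi [Hxi E]]; [lra| intros; apply Dg; lra|].
    rewrite gU in E.
    assert (g1 xi <= g1 U) by (destruct (Req_dec xi U) as [->|]; [lra| left; apply g1_incr; lra]).
    assert (0 <= U - y) by lra. nra. }
  assert (Pf v - g1 U * (U - v)^2 <= Pf U - g1 U * (U - U)^2); [|rewrite PfU in *; lra].
  apply (incr (fun y => Pf y - g1 U * (U - y)^2) (fun y => 2 * g y + 2 * g1 U * (U - y))); try lra.
  - intros x Hx. 
    apply Dext with (f := fun y => Pf y + (- g1 U) * ((U - y) * (U - y))).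
    { intros; simpl; ring. }
    apply Deq with (a := 2 * g x + (- g1 U) * (((0 - 1) * (U - x)) + (U - x) * (0 - 1))).
    { ring. }
    apply Dplus. apply DPf; lra. apply Dscal. apply Dmult;
    apply (derivable_pt_lim_minus (fun _ => U) (fun y => y)); [apply Dconst|apply Did| apply Dconst| apply Did].
  - intros x Hx. specialize (Hgl x ltac:(lra)). lra.
Qed.

Lemma exists_c ut : 0 < ut < U -> 0 < g ut ->
  exists c, ut < c < U /\ forall v, ut <= v <= c -> g ut / 2 <= g v.
Proof.
  intros Hut Hg.
  destruct (cont_eps g ut (g_cont ut ltac:(lra)) (g ut / 2)) as [d [Hd Hy]]; [lra|].
  set (c := ut + Rmin (d/2) ((U - ut)/2)).
  assert (0 < Rmin (d/2) ((U-ut)/2)) by (apply Rmin_pos; lra).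
  assert (Rmin (d/2) ((U-ut)/2) <= d/2) by apply Rmin_l.
  assert (Rmin (d/2) ((U-ut)/2) <= (U-ut)/2) by apply Rmin_r.
  exists c; split; [unfold c; lra|].
  intros v Hv. assert (Rabs (v - ut) < d) by (unfold c in Hv; rewrite Rabs_right; lra).
  specialize (Hy v H2). apply Rabs_def2 in Hy. lra.
Qed.


Lemma Cn_g n : Cn (fun x => 0 < x) n g.
Proof.
  apply Cn_ext with (f := fun u => /kappa * ((gamma * u + s^2 * Rpower u (-p)) + (- gamma*U - s^2*e))).
  - apply Cn_scal. apply Cn_plus; [|apply Cn_const]. apply Cn_plus.
    apply Cn_scal, Cn_id. apply Cn_scal, Cn_Rpower.
  - intros y; unfold g; field; lra.
Qed.

Section Orbit.
Variables ut c : R.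
Hypothesis hut : 0 < ut < U.
Hypothesis hP0 : Pf ut = 0.
Hypothesis hPpos : forall x, ut < x < U -> 0 < Pf x.
Hypothesis hgut : 0 < g ut.
Hypothesis hc : ut < c < U.
Hypothesis hgc : forall v, ut <= v <= c -> g ut / 2 <= g v.

Definition fi (v : R) := / sqrt (Pf v).
Definition Phi (u : R) := RInt fi c u.

Lemma Pf_lower v : ut <= v <= c -> g ut * (v - ut) <= Pf v.
Proof.
  intros Hv.
  assert (Pf ut - g ut * (ut - ut) <= Pf v - g ut * (v - ut)); [|rewrite hP0 in *; lra].
  apply (incr (fun y => Pf y - g ut * (y - ut)) (fun y => 2 * g y - g ut)); try lra.
  - intros x Hx.
    apply Dext with (f := fun y => Pf y + (- g ut) * (y + - ut)). { intros; ring. }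
    apply Deq with (a := 2 * g x + (- g ut) * (1 + 0)). { ring. }
    apply Dplus. apply DPf; lra. apply Dscal, Dplus. apply Did. apply Dconst.
  - intros x Hx. specialize (hgc x ltac:(lra)). lra.
Qed.

Lemma fi_cont v : ut < v < U -> continuity_pt fi v.
Proof.
  intros Hv. assert (HP := hPpos v Hv).
  unfold fi. apply (continuity_pt_inv (fun y => sqrt (Pf y))).
  - apply (continuity_pt_comp Pf sqrt). apply Pf_cont; lra. apply continuity_pt_sqrt; lra.
  - apply Rgt_not_eq, sqrt_lt_R0; auto.
Qed.

Lemma DPhi v : ut < v < U -> derivable_pt_lim Phi v (fi v).
Proof. intros Hv. unfold Phi. apply (antideriv fi ut U c); auto. apply fi_cont. Qed.

Lemma fi_pos v : ut < v < U -> 0 < fi v.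
Proof. intros Hv; unfold fi. apply Rinv_0_lt_compat, sqrt_lt_R0, hPpos; auto. Qed.

Lemma Phi_sincr x y : ut < x -> x < y -> y < U -> Phi x < Phi y.
Proof.
  intros H1 H2 H3. apply (sincr Phi fi); auto.
  intros; apply DPhi; lra. intros; apply fi_pos; lra.
Qed.

Lemma Phi_lower u : ut < u <= c -> Phi c - 2 * sqrt (c - ut) / sqrt (g ut) <= Phi u.
Proof.
  intros Hu. assert (Hsm : 0 < sqrt (g ut)) by (apply sqrt_lt_R0; auto).
  assert (Phi c - 2 * sqrt (c - ut) / sqrt (g ut) <= Phi u - 2 * sqrt (u - ut) / sqrt (g ut)).
  2:{ assert (0 <= sqrt (u - ut) / sqrt (g ut)) by (apply Rdiv_le_0_compat; auto; apply sqrt_pos). lra. }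
  apply (decr (fun y => Phi y - 2 * sqrt (y - ut) / sqrt (g ut))
     (fun y => fi y - / (sqrt (g ut) * sqrt (y - ut)))); try lra.
  - intros x Hx.
    assert (Hx0 : 0 < x - ut) by lra. assert (Hsx : 0 < sqrt (x - ut)) by (apply sqrt_lt_R0; auto).
    apply Dext with (f := fun y => Phi y + (- 2 / sqrt (g ut)) * sqrt (y + - ut)).
    { intros; unfold Rminus; field; lra. }
    apply Deq with (a := fi x + (- 2 / sqrt (g ut)) * (/ (2 * sqrt (x + - ut)) * (1 + 0))).
    { unfold Rminus in *. field. repeat split; lra. }
    apply Dplus. apply DPhi; lra. apply Dscal.
    apply (Dcomp sqrt (fun y => y + - ut)). apply Dplus; [apply Did|apply Dconst].
    apply derivable_pt_lim_sqrt; lra.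
  - intros x Hx.
    assert (Hx0 : 0 < x - ut) by lra.
    assert (HL := Pf_lower x ltac:(lra)).
    assert (HP : 0 < g ut * (x - ut)) by nra.
    unfold fi. rewrite <- sqrt_mult by lra.
    assert (sqrt (g ut * (x - ut)) <= sqrt (Pf x)) by (apply sqrt_le_1; lra).
    assert (0 < sqrt (g ut * (x - ut))) by (apply sqrt_lt_R0; auto).
    assert (/ sqrt (Pf x) <= / sqrt (g ut * (x - ut))) by (apply Rinv_le_contravar; auto).
    lra.
Qed.

Lemma Phi_growth v : c <= v < U -> Phi c + (ln (U - c) - ln (U - v)) / sqrt (g1 U) <= Phi v.
Proof.
  intros Hv. assert (HK := g1U). assert (Hsk : 0 < sqrt (g1 U)) by (apply sqrt_lt_R0; auto).
  assert (Phi c + ln (U - c) / sqrt (g1 U) <= Phi v + ln (U - v) / sqrt (g1 U)).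
  2:{ unfold Rdiv in *. lra. }
  apply (incr (fun y => Phi y + ln (U - y) / sqrt (g1 U))
     (fun y => fi y - / (sqrt (g1 U) * (U - y)))); try lra.
  - intros x Hx.
    apply Dext with (f := fun y => Phi y + (/ sqrt (g1 U)) * ln (U + - y)).
    { intros; unfold Rminus, Rdiv; ring. }
    apply Deq with (a := fi x + (/ sqrt (g1 U)) * (/ (U + - x) * (0 + - 1))).
    { unfold Rminus in *. field. repeat split; lra. }
    apply Dplus. apply DPhi; lra. apply Dscal.
    apply (Dcomp ln (fun y => U + - y)). apply Dplus; [apply Dconst|]. apply opp_D, Did.
    apply derivable_pt_lim_ln; lra.
  - intros x Hx.
    assert (Hx0 : 0 < U - x) by lra.
    assert (HL := Pf_upper x ltac:(lra)).
    assert (HP : 0 < Pf x) by (apply hPpos; lra).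
    assert (sqrt (Pf x) <= sqrt (g1 U) * (U - x)).
    { rewrite <- (sqrt_pow2 (U - x)) by lra. rewrite <- sqrt_mult by nra. apply sqrt_le_1; nra. }
    assert (0 < sqrt (Pf x)) by (apply sqrt_lt_R0; auto).
    assert (/ (sqrt (g1 U) * (U - x)) <= / sqrt (Pf x)) by (apply Rinv_le_contravar; auto).
    unfold fi. lra.
Qed.


Lemma exists_L : exists L, (forall x, ut < x < U -> L < Phi x) /\
  (forall eps, 0 < eps -> exists x, ut < x <= c /\ Phi x < L + eps).
Proof.
  set (E := fun y => exists x, ut < x <= c /\ y = - Phi x).
  assert (Hb : bound E).
  { exists (- (Phi c - 2 * sqrt (c - ut) / sqrt (g ut))). intros y [x [Hx ->]].
    assert (H := Phi_lower x Hx). lra. }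
  assert (Hne : exists y, E y) by (exists (- Phi c); exists c; split; [lra|auto]).
  destruct (completeness E Hb Hne) as [M [Hub Hlub]].
  exists (- M); split.
  - intros x Hx. set (x' := (ut + Rmin x c) / 2).
    assert (Rmin x c <= x) by apply Rmin_l. assert (Rmin x c <= c) by apply Rmin_r.
    assert (ut < Rmin x c) by (unfold Rmin; destruct Rle_dec; lra).
    assert (- Phi x' <= M) by (apply Hub; exists x'; split; [unfold x'; lra|auto]).
    assert (Phi x' < Phi x) by (apply Phi_sincr; unfold x'; lra). lra.
  - intros eps Heps. apply NNPP. intros Hno.
    assert (M <= M - eps); [|lra].
    apply Hlub. intros y [x [Hx ->]].
    destruct (Rlt_le_dec (Phi x) (- M + eps)) as [Hlt|]; [|lra].
    exfalso; apply Hno; exists x; split; auto.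
Qed.

Section Inv.
Variable L : R.
Hypothesis hL1 : forall x, ut < x < U -> L < Phi x.
Hypothesis hL2 : forall eps, 0 < eps -> exists x, ut < x <= c /\ Phi x < L + eps.

Definition Psi (x : R) := Phi x - L.

Lemma Psi_pos x : ut < x < U -> 0 < Psi x.
Proof. intros; unfold Psi; specialize (hL1 x H); lra. Qed.

Lemma Psi_sincr x y : ut < x -> x < y -> y < U -> Psi x < Psi y.
Proof. intros; unfold Psi; assert (Phi x < Phi y) by (apply Phi_sincr; auto); lra. Qed.

Lemma Psi_le x y : ut < x -> x <= y -> y < U -> Psi x <= Psi y.
Proof. intros H1 [H2| ->] H3; [left; apply Psi_sincr; auto | lra]. Qed.

Lemma DPsi v : ut < v < U -> derivable_pt_lim Psi v (fi v).
Proof.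
  intros Hv. unfold Psi. apply Dext with (f := fun y => Phi y + - L). { intros; ring. }
  apply Deq with (a := fi v + 0). ring. apply Dplus. apply DPhi; auto. apply Dconst.
Qed.

Lemma Psi_cont v : ut < v < U -> continuity_pt Psi v.
Proof. intros; apply (D_cont _ _ _ (DPsi v H)). Qed.

Lemma Psi_big z : exists x2, c < x2 < U /\ z < Psi x2.
Proof.
  assert (HK := g1U). assert (Hsk : 0 < sqrt (g1 U)) by (apply sqrt_lt_R0; auto).
  set (T := sqrt (g1 U) * (Rabs (L + z - Phi c) + 1)).
  assert (HT : 0 < T) by (unfold T; assert (0 <= Rabs (L + z - Phi c)) by apply Rabs_pos; nra).
  assert (He1 : exp (- T) < 1) by (rewrite <- exp_0; apply exp_increasing; lra).
  assert (He0 := exp_pos (- T)).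
  set (x2 := U - (U - c) * exp (- T)).
  assert (0 < (U - c) * exp (-T) < U - c) by (split; nra).
  assert (Hx2 : c < x2 < U) by (unfold x2; lra).
  exists x2; split; auto.
  assert (HG := Phi_growth x2 ltac:(lra)).
  assert (Hl : ln (U - x2) = ln (U - c) - T).
  { unfold x2. replace (U - (U - (U - c) * exp (- T))) with ((U - c) * exp (- T)) by ring.
    rewrite ln_mult by lra. rewrite ln_exp. ring. }
  rewrite Hl in HG. replace ((ln (U - c) - (ln (U - c) - T)) / sqrt (g1 U)) with
    (Rabs (L + z - Phi c) + 1) in HG by (unfold T; field; lra).
  unfold Psi. assert (L + z - Phi c <= Rabs (L + z - Phi c)) by apply Rle_abs. lra.
Qed.

Lemma Psi_surj z : 0 < z -> exists x, ut < x < U /\ Psi x = z.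
Proof.
  intros Hz. destruct (hL2 z Hz) as [x1 [Hx1 H1]].
  destruct (Psi_big z) as [x2 [Hx2 H2]].
  destruct (Ranalysis5.IVT_interv (fun x => Psi x - z) x1 x2) as [x [Hx Ex]].
  - intros a Ha. apply (continuity_pt_minus Psi (fun _ => z)). apply Psi_cont; lra.
    apply continuity_pt_const; intros ? ?; auto.
  - lra.
  - unfold Psi; lra.
  - lra.
  - exists x; split; [lra|]. lra.
Qed.

Definition invE (z : R) : R := epsilon (inhabits 0)
  (fun x => (z <= 0 /\ x = ut) \/ (0 < z /\ ut < x < U /\ Psi x = z)).

Lemma invE_pos z : 0 < z -> ut < invE z < U /\ Psi (invE z) = z.
Proof.
  intros Hz. unfold invE.
  destruct (epsilon_spec (inhabits 0) (fun x => (z <= 0 /\ x = ut) \/ (0 < z /\ ut < x < U /\ Psi x = z)))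
    as [[H1 _]|[_ H]]; [|lra|auto].
  destruct (Psi_surj z Hz) as [x Hx]; exists x; right; auto.
Qed.

Lemma invE_nonpos z : z <= 0 -> invE z = ut.
Proof.
  intros Hz. unfold invE.
  destruct (epsilon_spec (inhabits 0) (fun x => (z <= 0 /\ x = ut) \/ (0 < z /\ ut < x < U /\ Psi x = z)))
    as [[_ H]|[H _]]; auto; [|lra].
  exists ut; left; split; auto.
Qed.

Lemma invE_Psi x : ut < x < U -> invE (Psi x) = x.
Proof.
  intros Hx. assert (Hp := Psi_pos x Hx). destruct (invE_pos _ Hp) as [H1 H2].
  destruct (Rtotal_order (invE (Psi x)) x) as [Hlt|[Heq|Hgt]]; auto.
  - assert (Psi (invE (Psi x)) < Psi x) by (apply Psi_sincr; lra). lra.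
  - assert (Psi x < Psi (invE (Psi x))) by (apply Psi_sincr; lra). lra.
Qed.

Lemma invE_mono z1 z2 : 0 < z1 -> z1 < z2 -> invE z1 < invE z2.
Proof.
  intros H1 H2. destruct (invE_pos z1 H1) as [A1 B1]. destruct (invE_pos z2 ltac:(lra)) as [A2 B2].
  destruct (Rlt_le_dec (invE z1) (invE z2)) as [|Hle]; auto.
  assert (Psi (invE z2) <= Psi (invE z1)) by (apply Psi_le; lra). lra.
Qed.

Lemma invE_cont z : 0 < z -> continuity_pt invE z.
Proof.
  intros Hz. apply eps_cont. intros eps Heps.
  destruct (invE_pos z Hz) as [Hx0 Ex0]. set (x0 := invE z) in *.
  set (e' := Rmin eps (Rmin ((x0 - ut)/2) ((U - x0)/2))).
  assert (He' : 0 < e') by (unfold e'; repeat apply Rmin_pos; lra).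
  assert (e' <= eps) by apply Rmin_l.
  assert (e' <= (x0 - ut)/2) by (eapply Rle_trans; [apply Rmin_r|apply Rmin_l]).
  assert (e' <= (U - x0)/2) by (eapply Rle_trans; [apply Rmin_r|apply Rmin_r]).
  assert (Ha : Psi (x0 - e') < z) by (rewrite <- Ex0; apply Psi_sincr; lra).
  assert (Hb : z < Psi (x0 + e')) by (rewrite <- Ex0 at 1; apply Psi_sincr; lra).
  assert (Hpa : 0 < Psi (x0 - e')) by (apply Psi_pos; lra).
  exists (Rmin (z - Psi (x0 - e')) (Psi (x0 + e') - z)); split.
  { apply Rmin_pos; lra. }
  intros y Hy.
  assert (Hm1 := Rmin_l (z - Psi (x0 - e')) (Psi (x0 + e') - z)).
  assert (Hm2 := Rmin_r (z - Psi (x0 - e')) (Psi (x0 + e') - z)).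
  apply Rabs_def2 in Hy; destruct Hy.
  assert (Hy0 : 0 < y) by lra.
  destruct (invE_pos y Hy0) as [Hy1 Ey].
  assert (x0 - e' < invE y).
  { destruct (Rlt_le_dec (x0 - e') (invE y)) as [|Hle]; auto.
    assert (Psi (invE y) <= Psi (x0 - e')) by (apply Psi_le; lra). lra. }
  assert (invE y < x0 + e').
  { destruct (Rlt_le_dec (invE y) (x0 + e')) as [|Hle]; auto.
    assert (Psi (x0 + e') <= Psi (invE y)) by (apply Psi_le; lra). lra. }
  apply Rabs_def1; lra.
Qed.

Lemma invE_deriv z : 0 < z -> derivable_pt_lim invE z (sqrt (Pf (invE z))).
Proof.
  intros Hz.
  destruct (invE_pos z Hz) as [Hx0 Ex0].
  destruct (invE_pos (z/2) ltac:(lra)) as [Hl _].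
  destruct (invE_pos (2*z) ltac:(lra)) as [Hu _].
  assert (Hm1 : invE (z/2) < invE z) by (apply invE_mono; lra).
  assert (Hm2 : invE z < invE (2*z)) by (apply invE_mono; lra).
  assert (Hfi := fi_pos (invE z) Hx0).
  apply Deq with (a := 1 / fi (invE z)).
  { unfold fi. unfold Rdiv. rewrite Rmult_1_l, Rinv_inv. auto. }
  apply (inv_deriv Psi invE fi (z/2) (2*z) z); try lra.
  - apply invE_cont; auto.
  - intros a Ha. apply DPsi. lra.
  - intros y Hy. apply invE_pos; lra.
Qed.


Definition uu (z : R) := invE (Rabs z).
Definition vv (z : R) := (if Rlt_dec z 0 then -1 else 1) * sqrt (Pf (uu z)).

Lemma uu_range z : ut <= uu z < U.
Proof.
  unfold uu. destruct (Req_dec z 0) as [->|Hz].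
  - rewrite Rabs_R0, invE_nonpos by lra. lra.
  - assert (0 < Rabs z) by (apply Rabs_pos_lt; auto). destruct (invE_pos _ H). lra.
Qed.

Lemma uu_0 : uu 0 = ut.
Proof. unfold uu; rewrite Rabs_R0; apply invE_nonpos; lra. Qed.

Lemma uu_pos z : 0 < uu z.
Proof. destruct (uu_range z); lra. Qed.

Lemma Duu z : z <> 0 -> derivable_pt_lim uu z (vv z).
Proof.
  intros Hz. unfold vv, uu. destruct (Rlt_dec z 0) as [Hlt|Hge].
  - apply Deq with (a := sqrt (Pf (invE (Rabs z))) * (-1)). ring.
    apply (Dcomp invE Rabs). apply Rabs_derive_2; auto.
    apply invE_deriv. apply Rabs_pos_lt; auto.
  - apply Deq with (a := sqrt (Pf (invE (Rabs z))) * 1). ring.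
    apply (Dcomp invE Rabs). apply Rabs_derive_1; lra.
    apply invE_deriv. apply Rabs_pos_lt; auto.
Qed.

Lemma Pfuu_pos z : z <> 0 -> 0 < Pf (uu z).
Proof.
  intros Hz. unfold uu. apply hPpos. apply invE_pos. apply Rabs_pos_lt; auto.
Qed.

Lemma Dvv z : z <> 0 -> derivable_pt_lim vv z (g (uu z)).
Proof.
  intros Hz. assert (HP := Pfuu_pos z Hz). assert (Hs : 0 < sqrt (Pf (uu z))) by (apply sqrt_lt_R0; auto).
  assert (Hd := Duu z Hz). assert (Hu := uu_pos z).
  destruct (Rlt_dec z 0) as [Hlt|Hge].
  - apply D_ext_loc with (f := fun y => -1 * sqrt (Pf (uu y))).
    { exists (- z); split; [lra|]. intros y Hy. unfold vv.
      destruct (Rlt_dec y 0); auto. apply Rabs_def2 in Hy. lra. }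
    unfold vv in Hd. destruct (Rlt_dec z 0); [|lra].
    apply Deq with (a := -1 * (/ (2 * sqrt (Pf (uu z))) * (2 * g (uu z) * (-1 * sqrt (Pf (uu z)))))).
    { field; lra. }
    apply Dscal. apply (Dcomp sqrt (fun y => Pf (uu y))).
    apply (Dcomp Pf uu); auto. apply DPf; auto.
    apply derivable_pt_lim_sqrt; auto.
  - apply D_ext_loc with (f := fun y => 1 * sqrt (Pf (uu y))).
    { exists z; split; [lra|]. intros y Hy. unfold vv.
      destruct (Rlt_dec y 0); auto. apply Rabs_def2 in Hy. lra. }
    unfold vv in Hd. destruct (Rlt_dec z 0); [lra|].
    apply Deq with (a := 1 * (/ (2 * sqrt (Pf (uu z))) * (2 * g (uu z) * (1 * sqrt (Pf (uu z)))))).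
    { field; lra. }
    apply Dscal. apply (Dcomp sqrt (fun y => Pf (uu y))).
    apply (Dcomp Pf uu); auto. apply DPf; auto.
    apply derivable_pt_lim_sqrt; auto.
Qed.

Lemma uu_cont0 : continuity_pt uu 0.
Proof.
  apply eps_cont. intros eps Heps. rewrite uu_0.
  set (e' := Rmin eps ((U - ut)/2)).
  assert (He' : 0 < e') by (unfold e'; apply Rmin_pos; lra).
  assert (e' <= eps) by apply Rmin_l. assert (e' <= (U - ut)/2) by apply Rmin_r.
  assert (Hy : ut < ut + e' < U) by lra.
  exists (Psi (ut + e')); split. apply Psi_pos; auto.
  intros z Hz. rewrite Rminus_0_r in Hz. unfold uu.
  destruct (Req_dec z 0) as [->|Hz0].
  - rewrite Rabs_R0, invE_nonpos, Rminus_eq_0, Rabs_R0 by lra. lra.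
  - assert (0 < Rabs z) by (apply Rabs_pos_lt; auto).
    destruct (invE_pos _ H1) as [A _].
    assert (invE (Rabs z) < invE (Psi (ut + e'))) by (apply invE_mono; auto).
    rewrite invE_Psi in H2 by auto. rewrite Rabs_right; lra.
Qed.

Lemma uu_cont z : continuity_pt uu z.
Proof.
  destruct (Req_dec z 0) as [->|Hz]. apply uu_cont0. apply (D_cont _ _ _ (Duu z Hz)).
Qed.

Lemma vv_cont0 : continuity_pt vv 0.
Proof.
  set (w := fun y => sqrt (Pf (uu y))).
  assert (Hw : continuity_pt w 0).
  { apply (continuity_pt_comp (fun y => Pf (uu y)) sqrt).
    apply (continuity_pt_comp uu Pf). apply uu_cont0. rewrite uu_0; apply Pf_cont; lra.
    rewrite uu_0, hP0. apply continuity_pt_sqrt; lra. }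
  apply eps_cont. intros eps Heps. destruct (cont_eps w 0 Hw eps Heps) as [d [Hd Hy]].
  exists d; split; auto. intros y Hyd. specialize (Hy y Hyd).
  assert (Ew0 : w 0 = 0) by (unfold w; rewrite uu_0, hP0; apply sqrt_0).
  assert (Ev0 : vv 0 = 0) by (unfold vv; destruct (Rlt_dec 0 0); [lra|]; fold (w 0); rewrite Ew0; ring).
  rewrite Ev0. rewrite Ew0 in Hy. unfold vv; fold (w y).
  destruct (Rlt_dec y 0); rewrite Rminus_0_r in *; rewrite Rabs_mult; [rewrite Rabs_m1|rewrite Rabs_R1]; lra.
Qed.

Lemma vv_cont z : continuity_pt vv z.
Proof.
  destruct (Req_dec z 0) as [->|Hz]. apply vv_cont0. apply (D_cont _ _ _ (Dvv z Hz)).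
Qed.

Lemma Duu_all z : derivable_pt_lim uu z (vv z).
Proof.
  destruct (Req_dec z 0) as [->|Hz]; [|apply Duu; auto].
  apply deriv_at_mvt; auto using uu_cont, vv_cont0, Duu.
Qed.

Lemma Dvv_all z : derivable_pt_lim vv z (g (uu z)).
Proof.
  destruct (Req_dec z 0) as [->|Hz]; [|apply Dvv; auto].
  apply (deriv_at_mvt vv (fun y => g (uu y))); auto using vv_cont, Dvv.
  apply (continuity_pt_comp uu g). apply uu_cont0. rewrite uu_0; apply g_cont; lra.
Qed.

Lemma uu_lim eps : 0 < eps -> exists M, forall z, M < Rabs z -> Rabs (uu z - U) < eps.
Proof.
  intros Heps.
  set (e' := Rmin eps ((U - ut)/2)).
  assert (He' : 0 < e') by (unfold e'; apply Rmin_pos; lra).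
  assert (e' <= eps) by apply Rmin_l. assert (e' <= (U - ut)/2) by apply Rmin_r.
  assert (Hy : ut < U - e' < U) by lra.
  assert (Hp := Psi_pos _ Hy).
  exists (Psi (U - e')). intros z Hz. unfold uu.
  destruct (invE_pos (Rabs z) ltac:(lra)) as [A _].
  assert (invE (Psi (U - e')) < invE (Rabs z)) by (apply invE_mono; auto).
  rewrite invE_Psi in H1 by auto. rewrite Rabs_left; lra.
Qed.

Lemma uu_nonconst : uu 0 <> uu c.
Proof.
  rewrite uu_0. intro E.
  assert (uu c <> ut); [|auto].
  destruct (uu_range c). unfold uu in *.
  rewrite Rabs_right by lra. intros E2. destruct (invE_pos c ltac:(lra)). lra.
Qed.

Lemma main_inv : exists w eta : R -> R,
    smooth w /\ smooth eta /\
    (forall z, 0 < eta z) /\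
    (exists z1 z2, w z1 <> w z2 \/ eta z1 <> eta z2) /\
    (forall z, s * w z + Rpower e (- (nu + 2)) - Rpower (eta z) (- (nu + 2)) = 0) /\
    (exists w1 w2 : R -> R,
       (forall z, derivable_pt_lim w z (w1 z)) /\
       (forall z, derivable_pt_lim w1 z (w2 z)) /\
       (forall z, gamma * w z - kappa * w2 z + s * (eta z - e) = 0)) /\
    lim_pinf eta e /\ lim_minf eta e /\
    lim_pinf w 0 /\ lim_minf w 0 /\
    (forall z, e < eta z).
Proof.
  assert (Hs := s_ne). assert (HU := U_pos). assert (Hp := p_bounds).
  assert (Boot := bootstrap uu vv g Duu_all Dvv_all uu_pos Cn_g).
  exists (fun z => (uu z - U) / s), (fun z => Rpower (uu z) (-p)).
  assert (Heta_lim : forall eps, 0 < eps -> exists M, forall z, M < Rabs z ->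
            Rabs (Rpower (uu z) (-p) - e) < eps).
  { intros eps Heps.
    assert (Hc : continuity_pt (fun x => Rpower x (-p)) U)
      by (apply (D_cont _ _ _ (derivable_pt_lim_power U (-p) HU))).
    destruct (cont_eps _ _ Hc eps Heps) as [d [Hd Hy]].
    destruct (uu_lim d Hd) as [M HM]. exists M. intros z Hz.
    rewrite <- RU. apply Hy. apply HM; auto. }
  assert (Hw_lim : forall eps, 0 < eps -> exists M, forall z, M < Rabs z ->
            Rabs ((uu z - U) / s - 0) < eps).
  { intros eps Heps. assert (Has : 0 < Rabs s) by (apply Rabs_pos_lt; auto).
    destruct (uu_lim (eps * Rabs s) ltac:(nra)) as [M HM]. exists M. intros z Hz.
    specialize (HM z Hz). rewrite Rminus_0_r. unfold Rdiv. rewrite Rabs_mult, Rabs_inv.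
    apply (Rmult_lt_reg_r (Rabs s)); auto. rewrite Rmult_assoc, Rinv_l by lra. lra. }
  split; [|split; [|split; [|split; [|split; [|split; [|split; [|split; [|split; [|split]]]]]]]]].
  - apply Cn_smooth. intros n.
    apply Cn_ext with (f := fun z => / s * uu z + (- U / s)).
    apply Cn_plus; [apply Cn_scal, (proj1 (Boot n))|apply Cn_const].
    intros; field; auto.
  - apply Cn_smooth. intros n.
    apply (Cn_comp (fun x => 0 < x) _ n (fun x => Rpower x (-p)) uu). apply Cn_Rpower. apply (proj1 (Boot n)).
    intros; apply uu_pos.
  - intros; apply Rpow_pos.
  - exists 0, c. left. intros E. apply uu_nonconst.
    assert (uu 0 - U = uu c - U); [|lra].
    apply (Rmult_eq_reg_r (/ s)); [exact E|]. apply Rinv_neq_0_compat; auto.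
  - intros z. rewrite inv_pow by apply uu_pos. fold U. field; auto.
  - exists (fun z => vv z / s), (fun z => g (uu z) / s). split; [|split].
    + intros z. apply Dext with (f := fun z => / s * uu z + (- U / s)). { intros; field; auto. }
      apply Deq with (a := / s * vv z + 0). { field; auto. }
      apply Dplus; [apply Dscal, Duu_all|apply Dconst].
    + intros z. apply Dext with (f := fun z => / s * vv z). { intros; field; auto. }
      apply Deq with (a := / s * g (uu z)). { field; auto. }
      apply Dscal, Dvv_all.
    + intros z. unfold g. field. split; auto; lra.
  - intros eps Heps. destruct (Heta_lim eps Heps) as [M HM]. exists (Rabs M).
    intros z Hz. apply HM. assert (M <= Rabs M) by apply Rle_abs.
    assert (z <= Rabs z) by apply Rle_abs. lra.
  - intros eps Heps. destruct (Heta_lim eps Heps) as [M HM]. exists (- Rabs M).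
    intros z Hz. apply HM. assert (M <= Rabs M) by apply Rle_abs.
    assert (- z <= Rabs z) by (rewrite <- Rabs_Ropp; apply Rle_abs). lra.
  - intros eps Heps. destruct (Hw_lim eps Heps) as [M HM]. exists (Rabs M).
    intros z Hz. apply HM. assert (M <= Rabs M) by apply Rle_abs.
    assert (z <= Rabs z) by apply Rle_abs. lra.
  - intros eps Heps. destruct (Hw_lim eps Heps) as [M HM]. exists (- Rabs M).
    intros z Hz. apply HM. assert (M <= Rabs M) by apply Rle_abs.
    assert (- z <= Rabs z) by (rewrite <- Rabs_Ropp; apply Rle_abs). lra.
  - intros z. rewrite <- RU at 1. apply Rpow_decr. lra. split. apply uu_pos. apply uu_range.
Qed.

End Inv.
End Orbit.

Lemma main_in : exists w eta : R -> R,
    smooth w /\ smooth eta /\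
    (forall z, 0 < eta z) /\
    (exists z1 z2, w z1 <> w z2 \/ eta z1 <> eta z2) /\
    (forall z, s * w z + Rpower e (- (nu + 2)) - Rpower (eta z) (- (nu + 2)) = 0) /\
    (exists w1 w2 : R -> R,
       (forall z, derivable_pt_lim w z (w1 z)) /\
       (forall z, derivable_pt_lim w1 z (w2 z)) /\
       (forall z, gamma * w z - kappa * w2 z + s * (eta z - e) = 0)) /\
    lim_pinf eta e /\ lim_minf eta e /\
    lim_pinf w 0 /\ lim_minf w 0 /\
    (forall z, e < eta z).
Proof.
  destruct exists_ut as [ut [Hut [HP0 [Hpos Hg]]]].
  destruct (exists_c ut Hut Hg) as [c [Hc Hgc]].
  assert (HL : exists L, (forall x, ut < x < U -> L < Phi c x) /\
    (forall eps, 0 < eps -> exists x, ut < x <= c /\ Phi c x < L + eps)).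
  { eapply exists_L; eauto. }
  destruct HL as [L [HL1 HL2]].
  eapply (main_inv ut c); eauto.
Qed.

End Main.

Theorem mainTheorem1 (beta nu kappa gamma eta_inf s : R)
  (hbeta : 0 < beta) (hnu : -1 < nu) (hkappa : 0 < kappa)
  (hgamma : gamma = beta / (nu + 2)) (heta : 0 < eta_inf)
  (hs_lo : beta * (nu + 1) / (2 * (nu + 2) * Rpower eta_inf (nu + 3)) < s ^ 2)
  (hs_hi : s ^ 2 < beta / Rpower eta_inf (nu + 3)) :
  exists w eta : R -> R,
    smooth w /\ smooth eta /\
    (forall z, 0 < eta z) /\
    (exists z1 z2, w z1 <> w z2 \/ eta z1 <> eta z2) /\
    (forall z, s * w z + Rpower eta_inf (- (nu + 2)) - Rpower (eta z) (- (nu + 2)) = 0) /\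
    (exists w1 w2 : R -> R,
       (forall z, derivable_pt_lim w z (w1 z)) /\
       (forall z, derivable_pt_lim w1 z (w2 z)) /\
       (forall z, gamma * w z - kappa * w2 z + s * (eta z - eta_inf) = 0)) /\
    lim_pinf eta eta_inf /\ lim_minf eta eta_inf /\
    lim_pinf w 0 /\ lim_minf w 0 /\
    (forall z, eta_inf < eta z).
Proof.
  exact (main_in beta nu kappa gamma eta_inf s hbeta hnu hkappa hgamma heta hs_lo hs_hi).
Qed.
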